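(* Fix an integer $m>1$. Let $\{z_n\}$ be generated by $\mathcal{S}(\kappa,\Phi)$ with $\kappa$ satisfying $\sum_{n}\rho^{\kappa(n)}=\infty$ for all $0<\rho\le1$ and $\Phi(x,S)=d(x,S)=\inf_{s\in S}d(x,s)$, and let $\zeta_n$ now denote the $m$ nearest neighbors prediction $\zeta_n(x)=\operatorname{mode}_f(U_{Z_n}(x))$. If $x\in\operatorname{supp}(\mu)$ is not an $f$-boundary point, then $\zeta_n(x)\to f(x)$ with probability one.
   Context: $(X,d)$ metric space with probability measure $\mu$; $Y$ countable; $f:X\to Y$; $X_y=f^{-1}(y)$; $B_\epsilon(x)$ open ball; $\operatorname{supp}(\mu)=\{x:\mu(B_\epsilon(x))>0\ \forall\epsilon>0\}$. $b$ is an $f$-boundary point iff $\mu(B_\epsilon(b)\setminus X_{f(b)})>0$ for all $\epsilon>0$. Process $\mathcal{S}(\kappa,\Phi)$: $Z_0=\emptyset$; at step $n$ draw $\kappa(n)$ candidates i.i.d. from $\mu$, independent of the past; $z_n$ maximizes $\Phi(\cdot,Z_{n-1})$ over candidates (ties uniformly at random); $Z_n=\{z_1,\dots,z_n\}$. For finite $A$, $\operatorname{modefreq}_f(A)=\max_y|A\cap X_y|$ and $\operatorname{mode}_f(A)$ is a value $y$ attaining this maximum (ties uniformly at random). $m$ nearest neighbors: for $S\subseteq X$ let $\mathcal{U}_x$ be the family of $m$-element subsets of $S$ minimizing distance to $x$; $U_S(x)=\{x\}$ if $x\in S$, otherwise $U_S(x)=\arg\min_{U\in\mathcal{U}_x}\operatorname{modefreq}_f(U)$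 (for $n<m$, use all of $Z_n$). *)

(* Defs.v *)
From HB Require Import structures.
From mathcomp Require Import all_boot all_order all_algebra.
From mathcomp Require Import all_classical all_reals all_analysis.
Set Implicit Arguments. Unset Strict Implicit. Unset Printing Implicit Defensive.
Import Order.TTheory GRing.Theory Num.Theory.
Local Open Scope classical_set_scope.
Local Open Scope ring_scope.

Section Defs.
Context {R : realType}.

Definition is_metric {X : Type} (dist : X -> X -> R) : Prop :=
  (forall x y, 0 <= dist x y) /\ (forall x y, dist x y = 0 <-> x = y) /\
  (forall x y, dist x y = dist y x) /\
  (forall x y z, dist x z <= dist x y + dist y z).

Definition oball {X : Type} (dist : X -> X -> R) (x : X) (eps : R) : set X :=
  [set y | dist x y < eps].

(* d(x,S) = inf_{s in S} d(x,s), as an extended real (= +oo for S empty) *)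
Definition dist_set {X : Type} (dist : X -> X -> R) (x : X) (S : set X) : \bar R :=
  ereal_inf [set (dist x s)%:E | s in S].

Definition in_supp {dX} {X : measurableType dX} (dist : X -> X -> R)
    (mu : set X -> \bar R) (x : X) : Prop :=
  forall eps : R, 0 < eps -> (0 < mu (oball dist x eps))%E.

Definition f_boundary {dX} {X : measurableType dX} {Y : Type} (dist : X -> X -> R)
    (mu : set X -> \bar R) (f : X -> Y) (b : X) : Prop :=
  forall eps : R, 0 < eps ->
    (0 < mu (oball dist b eps `\` (f @^-1` [set f b])))%E.

Definition iid_family {dO dX} {Omega : measurableType dO} {X : measurableType dX}
    {I : eqType} (P : probability Omega R) (J : set I) (c : I -> Omega -> X)
    (mu : probability X R) : Prop :=
  (forall i, J i -> measurable_fun setT (c i)) /\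
  (forall i A, J i -> measurable A -> P (c i @^-1` A) = mu A) /\
  (forall (F : seq I) (A : I -> set X), uniq F -> (forall i, i \in F -> J i) ->
     (forall i, measurable (A i)) ->
     P (\big[setI/setT]_(i <- F) (c i @^-1` A i)) =
     (\big[*%E/1%E]_(i <- F) P (c i @^-1` A i))%E).

(* The process S(kappa, Phi) with Phi(x,S) = d(x,S): at step n >= 1 the
   candidates are cand (n, j), j < kappa n, and z n is a maximizer of
   d(., Z_{n-1}) among them (ties broken by an arbitrary rule). *)
Definition Zset {Omega X : Type} (z : nat -> Omega -> X) (n : nat) (w : Omega) : set X :=
  [set z k w | k in [set k | (1 <= k <= n)%N]].

Definition farthest_process {Omega X : Type} (dist : X -> X -> R) (kappa : nat -> nat)
    (cand : nat * nat -> Omega -> X) (z : nat -> Omega -> X) : Prop :=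
  forall (n : nat) (w : Omega), (1 <= n)%N ->
    (exists2 j, (j < kappa n)%N & z n w = cand (n, j) w) /\
    (forall j, (j < kappa n)%N ->
       (dist_set dist (cand (n, j) w) (Zset z n.-1 w)
         <= dist_set dist (z n w) (Zset z n.-1 w))%E).

Definition Zseq {Omega X : Type} (z : nat -> Omega -> X) (n : nat) (w : Omega) : seq X :=
  [seq z k w | k <- iota 1 n].

(* modefreq_f(A) = max_y |A cap X_y| for a duplicate-free list A *)
Definition modefreq {X Y : eqType} (f : X -> Y) (A : seq X) : nat :=
  \max_(a <- A) count (fun v => f v == f a) A.

Definition is_mode {X Y : eqType} (f : X -> Y) (A : seq X) (y : Y) : Prop :=
  count (fun v => f v == y) A = modefreq f A.

Definition msubset {X : eqType} (m : nat) (S U : seq X) : Prop :=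
  [/\ uniq U, size U = m & {subset U <= S}].

Definition nn_family {X : eqType} (dist : X -> X -> R) (m : nat) (S : seq X)
    (x : X) (U : seq X) : Prop :=
  if (size (undup S) < m)%N then uniq U /\ U =i S
  else msubset m S U /\
       (forall V, msubset m S V -> \sum_(u <- U) dist x u <= \sum_(v <- V) dist x v).

Definition nn_choice {X Y : eqType} (dist : X -> X -> R) (f : X -> Y) (m : nat)
    (S : seq X) (x : X) (U : seq X) : Prop :=
  if x \in S then U = [:: x]
  else nn_family dist m S x U /\
       (forall V, nn_family dist m S x V -> (modefreq f U <= modefreq f V)%N).

End Defs.

(* Main.v *)
Require Import Defs.
From HB Require Import structures.
From mathcomp Require Import all_boot all_order all_algebra.
From mathcomp Require Import all_classical all_reals all_analysis.
From mathcomp Require Import ring lra.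
Import Order.TTheory GRing.Theory Num.Theory.
Local Open Scope classical_set_scope.
Local Open Scope ring_scope.

Lemma prod_bound (R : realType) (q : nat -> R) (L : seq nat) :
  (forall n, 0 <= q n <= 1) ->
  [/\ 0 <= \prod_(n <- L) (1 - q n), \prod_(n <- L) (1 - q n) <= 1,
      0 <= \sum_(n <- L) q n &
      (\prod_(n <- L) (1 - q n)) * (1 + \sum_(n <- L) q n) <= 1].
Proof.
move=> hq; elim: L => [|a L [h1 h2 h3 h4]]; first by rewrite !big_nil; split; lra.
rewrite !big_cons; have /andP[qa0 qa1] := hq a.
split; [nra|nra|lra|].
set p := \prod_(_ <- _) _ in h1 h2 h4 *; set s := \sum_(_ <- _) _ in h3 h4 *.
have : (1 - q a) * p * (1 + (q a + s)) = (1 - q a) * (p * (1 + s) + q a * p) by ring.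
move=> ->. nra.
Qed.

Definition Aev {Omega X : Type} (kappa : nat -> nat) (cand : nat * nat -> Omega -> X)
  (B : set X) (n : nat) : set Omega :=
  \big[setI/setT]_(j <- iota 0 (kappa n)) (cand (n, j) @^-1` B).

Definition pairsL (kappa : nat -> nat) (G : seq nat) : seq (nat * nat) :=
  flatten [seq [seq (n, j) | j <- iota 0 (kappa n)] | n <- G].

Lemma pairsL_mem kappa G i : i \in pairsL kappa G -> i.1 \in G /\ (i.2 < kappa i.1)%N.
Proof.
elim: G => [//|a G IH] /=; rewrite /pairsL /= mem_cat => /orP[|/IH[h1 h2]].
  case/mapP=> j; rewrite mem_iota add0n => /andP[_ hj] ->; by rewrite /= mem_head.
by rewrite in_cons h1 orbT.
Qed.

Lemma pairsL_uniq kappa G : uniq G -> uniq (pairsL kappa G).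
Proof.
elim: G => [//|a G IH] /= /andP[aG uG]; rewrite /pairsL /= cat_uniq.
apply/and3P; split.
- by rewrite map_inj_uniq ?iota_uniq // => j1 j2 [].
- apply/hasPn => i /pairsL_mem [h1 _]; apply/negP => /mapP [j _ e].
  by move: h1; rewrite e /= (negbTE aG).
- exact: IH.
Qed.

Lemma pairsL_big {Omega X : Type} kappa (cand : nat * nat -> Omega -> X) B G :
  \big[setI/setT]_(i <- pairsL kappa G) (cand i @^-1` B) =
  \big[setI/setT]_(n <- G) Aev kappa cand B n.
Proof.
elim: G => [|a G IH]; first by rewrite /pairsL /= !big_nil.
by rewrite /pairsL /= big_cat big_cons big_map -IH.
Qed.

Lemma Aev_meas (R : realType) (dO dX : measure_display) (Omega : measurableType dO)
  (X : measurableType dX) (P : probability Omega R) (mu : probability X R)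
  kappa (cand : nat * nat -> Omega -> X) B :
  iid_family P [set ij | (1 <= ij.1)%N /\ (ij.2 < kappa ij.1)%N] cand mu ->
  measurable B -> forall n, (1 <= n)%N -> measurable (Aev kappa cand B n).
Proof.
move=> [hm _] mB n n1; rewrite /Aev big_seq; apply: bigsetI_measurable => j.
rewrite mem_iota add0n => /andP[_ hj].
by rewrite -[X in measurable X]setTI; apply: (hm (n, j)) => //.
Qed.

Lemma prod_const (R : realType) (dO dX : measure_display) (Omega : measurableType dO)
  (X : measurableType dX) (P : probability Omega R) (mu : probability X R)
  kappa (cand : nat * nat -> Omega -> X) B :
  iid_family P [set ij | (1 <= ij.1)%N /\ (ij.2 < kappa ij.1)%N] cand mu ->
  measurable B -> forall G, (forall n, n \in G -> (1 <= n)%N) ->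
  (\big[*%E/1%E]_(i <- pairsL kappa G) P (cand i @^-1` B) =
   (\prod_(n <- G) fine (mu B) ^+ kappa n)%:E)%E.
Proof.
move=> [_ [hl _]] mB; elim => [|a G IH] hG; first by rewrite /pairsL !big_nil.
rewrite /pairsL /= big_cat big_cons /= -/(pairsL kappa G) IH; last first.
  by move=> n nG; apply: hG; rewrite in_cons nG orbT.
rewrite EFinM; congr (_ * _)%E.
have a1 : (1 <= a)%N by apply: hG; rewrite mem_head.
rewrite big_map.
have : forall s, all (fun j => j < kappa a)%N s ->
  (\big[*%E/1%E]_(j <- s) P (cand (a, j) @^-1` B) = (fine (mu B) ^+ size s)%:E)%E.
  elim => [|b s IHs] /=; first by rewrite big_nil.
  move=> /andP[hb hs]; rewrite big_cons IHs // exprS EFinM; congr (_ * _)%E.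
  rewrite hl //= fineK // fin_num_measure //.
move=> /(_ (iota 0 (kappa a))); rewrite size_iota; apply.
by apply/allP => j; rewrite mem_iota add0n => /andP[].
Qed.

Lemma indep_Aev (R : realType) (dO dX : measure_display) (Omega : measurableType dO)
  (X : measurableType dX) (P : probability Omega R) (mu : probability X R)
  kappa (cand : nat * nat -> Omega -> X) B :
  iid_family P [set ij | (1 <= ij.1)%N /\ (ij.2 < kappa ij.1)%N] cand mu ->
  measurable B -> forall F G, uniq (G ++ F) -> (forall n, n \in G ++ F -> (1 <= n)%N) ->
  P (\big[setI/setT]_(n <- G) Aev kappa cand B n `&`
     \big[setI/setT]_(n <- F) ~` Aev kappa cand B n) =
   ((\prod_(n <- G) fine (mu B) ^+ kappa n) *
    \prod_(n <- F) (1 - fine (mu B) ^+ kappa n))%:E.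
Proof.
move=> hiid mB; elim => [|a F IH] G.
  rewrite cats0 => uG hG; rewrite !big_nil setIT mulr1 -pairsL_big.
  have [_ [_ hp]] := hiid.
  rewrite (hp _ (fun=> B)) //.
  - by apply: prod_const.
  - exact: pairsL_uniq.
  - by move=> i /pairsL_mem [h1 h2]; split => //; apply: hG.
have hAm := @Aev_meas _ _ _ _ _ _ _ _ _ _ hiid mB.
move=> uGF hGF.
have a1 : (1 <= a)%N by apply: hGF; rewrite mem_cat mem_head orbT.
have uGF' : uniq (G ++ F).
  by move: uGF; rewrite !cat_uniq /= => /and3P[-> /norP[_ ->] /andP[_ ->]].
have hGF' : forall n, n \in G ++ F -> (1 <= n)%N.
  move=> n; rewrite mem_cat => /orP[h|h]; apply: hGF; rewrite mem_cat.
    by rewrite h.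
  by rewrite in_cons h !orbT.
have pe : perm_eq ((a :: G) ++ F) (G ++ a :: F).
  by apply/permPl; exact: (perm_catCA [:: a] G F).
have uaGF : uniq ((a :: G) ++ F).
  by rewrite (perm_uniq pe).
have haGF : forall n, n \in (a :: G) ++ F -> (1 <= n)%N.
  by move=> n; rewrite (perm_mem pe); apply: hGF.
have mI : forall L, (forall n, n \in L -> (1 <= n)%N) ->
   measurable (\big[setI/setT]_(n <- L) Aev kappa cand B n).
  by move=> L hL; rewrite big_seq; apply: bigsetI_measurable => n /hL; apply: hAm.
have mC : forall L, (forall n, n \in L -> (1 <= n)%N) ->
   measurable (\big[setI/setT]_(n <- L) ~` Aev kappa cand B n).
  move=> L hL; rewrite big_seq; apply: bigsetI_measurable => n /hL h.
  by apply: measurableC; apply: hAm.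
set X0 := \big[setI/setT]_(n <- G) Aev kappa cand B n `&`
     \big[setI/setT]_(n <- F) ~` Aev kappa cand B n.
have mX0 : measurable X0.
  apply: measurableI; [apply: mI|apply: mC] => n hn; apply: hGF';
  by rewrite mem_cat hn ?orbT.
have -> : \big[setI/setT]_(n <- G) Aev kappa cand B n `&`
     \big[setI/setT]_(n <- a :: F) ~` Aev kappa cand B n = X0 `\` Aev kappa cand B a.
  by rewrite big_cons /X0 setDE setIA setIAC.
have hD : P (X0 `\` Aev kappa cand B a) = (P X0 - P (X0 `&` Aev kappa cand B a))%E.
  apply: (measureD mX0 (hAm a a1)).
  by apply: (le_lt_trans (probability_le1 P mX0)); rewrite ltey.
rewrite hD.
have -> : X0 `&` Aev kappa cand B a =
   \big[setI/setT]_(n <- a :: G) Aev kappa cand B n `&`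
     \big[setI/setT]_(n <- F) ~` Aev kappa cand B n.
  by rewrite big_cons /X0 setIC !setIA.
rewrite [X in (_ - X)%E]IH // /X0 IH // -EFinB big_cons big_cons.
congr (_%:E); ring.
Qed.

Lemma bigI_mem {T : Type} (L : seq nat) (G : nat -> set T) w :
  (forall n, n \in L -> G n w) -> (\big[setI/setT]_(n <- L) G n) w.
Proof.
elim: L => [|a L IH] h; first by rewrite big_nil.
rewrite big_cons; split; first by apply: h; rewrite mem_head.
by apply: IH => n nL; apply: h; rewrite in_cons nL orbT.
Qed.

Lemma never_null (R : realType) (dO dX : measure_display) (Omega : measurableType dO)
  (X : measurableType dX) (P : probability Omega R) (mu : probability X R)
  kappa (cand : nat * nat -> Omega -> X) B :
  iid_family P [set ij | (1 <= ij.1)%N /\ (ij.2 < kappa ij.1)%N] cand mu ->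
  measurable B -> 0 < fine (mu B) ->
  (forall rho : R, 0 < rho <= 1 ->
     (fun N => \sum_(1 <= n < N) rho ^+ kappa n) @ \oo --> +oo) ->
  P (\bigcap_(n in [set n | (1 <= n)%N]) ~` Aev kappa cand B n) = 0%E.
Proof.
move=> hiid mB hp hdiv.
have hAm := @Aev_meas _ _ _ _ _ _ _ _ _ _ hiid mB.
set E := \bigcap_(n in _) _.
have mE : measurable E.
  by apply: bigcap_measurableType => n n1; apply: measurableC; apply: hAm.
set p := fine (mu B).
have p1 : p <= 1.
  rewrite /p -lee_fin fineK ?fin_num_measure //; exact: probability_le1.
have hq : forall n, 0 <= p ^+ kappa n <= 1.
  by move=> n; apply/andP; split; [apply: exprn_ge0; exact: ltW|apply: exprn_ile1 => //; exact: ltW].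
have hle : forall N, fine (P E) * (1 + \sum_(1 <= n < N) p ^+ kappa n) <= 1.
  move=> N; have [h1 h2 h3 h4] := @prod_bound _ _ (index_iota 1 N) hq.
  have hI := @indep_Aev _ _ _ _ _ _ _ _ _ _ hiid mB (index_iota 1 N) [::]
    (iota_uniq _ _) (fun n hn => ltac:(by move: hn; rewrite mem_index_iota => /andP[])).
  rewrite !big_nil setTI mul1r in hI.
  apply: le_trans h4; apply: ler_wpM2r; first lra.
  have mC : measurable (\big[setI/setT]_(n <- index_iota 1 N) ~` Aev kappa cand B n).
    rewrite big_seq; apply: bigsetI_measurable => n.
    by rewrite mem_index_iota => /andP[n1 _]; apply: measurableC; apply: hAm.
  rewrite -lee_fin fineK ?fin_num_measure // -hI.
  apply: le_measure; rewrite ?inE //.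
  move=> w Ew; apply: bigI_mem => n; rewrite mem_index_iota => /andP[n1 _].
  by apply: Ew.
have r0 : 0 <= fine (P E) by apply: fine_ge0; apply: measure_ge0.
have rle : fine (P E) <= 0.
  rewrite leNgt; apply/negP => rpos.
  have := hdiv p; rewrite hp p1 => /(_ isT) /cvgryPger /(_ (fine (P E))^-1).
  rewrite num_real => /(_ isT) [N _ hN].
  have := hN N (leqnn N); rewrite /= => hs.
  have := hle N; set s := \sum_(_ <= _ < _) _ in hs *.
  have : fine (P E) * s >= 1.
    by rewrite -(mulfV (lt0r_neq0 rpos)); apply: ler_wpM2l; [lra|].
  nra.
have -> : P E = (fine (P E))%:E by rewrite fineK ?fin_num_measure.
by congr (_%:E); lra.
Qed.

Lemma minpos (R : realType) (X : eqType) (W : seq X) (g : X -> R) :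
  (forall u, u \in W -> 0 < g u) -> forall e, 0 < e ->
  exists r, [/\ 0 < r, r <= e & forall u, u \in W -> r <= g u].
Proof.
elim: W => [|a W IH] hW e e0; first by exists e; split => //; lra.
have [r [r0 re hr]] := IH (fun u uW => hW u (mem_behead (s := a :: W) uW)) e e0.
have ga := hW a (mem_head _ _).
have [h|h] := lerP r (g a).
  exists r; split => // u; rewrite in_cons => /orP[/eqP->//|]; exact: hr.
exists (g a); split => //; first lra.
move=> u; rewrite in_cons => /orP[/eqP->//|/hr]; lra.
Qed.

Lemma collect (R : realType) (X : eqType) (dist : X -> X -> R) (zs : nat -> X) x eps0 :
  is_metric dist -> 0 < eps0 ->
  (forall r, 0 < r -> exists2 n, (1 <= n)%N & dist x (zs n) < r) ->
  (forall n, (1 <= n)%N -> zs n != x) ->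
  forall c, exists N, exists W : seq X, [/\ uniq W, size W = c &
    forall u, u \in W -> dist x u < eps0 /\ exists2 k, (1 <= k <= N)%N & zs k = u].
Proof.
move=> [d0 [dE [dS _]]] e0 hclose hne; elim => [|c [N [W [uW sW hW]]]].
  by exists 0%N, [::]; split.
have hpos : forall u, u \in W -> 0 < dist x u.
  move=> u /hW [_ [k /andP[k1 _] <-]]; rewrite lt0r d0 andbT.
  apply/eqP => /dE e; move: (hne k k1); by rewrite e eqxx.
have [r [r0 re hr]] := @minpos _ _ _ _ hpos _ e0.
have [n n1 hn] := hclose r r0.
exists (maxn N n), (zs n :: W); split.
- rewrite /= uW andbT; apply/negP => /hr; lra.
- by rewrite /= sW.
- move=> u; rewrite in_cons => /orP[/eqP->|/hW [hu [k /andP[k1 kN] ek]]].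
    split; first lra.
    by exists n => //; rewrite n1 leq_maxr.
  split => //; exists k => //; rewrite k1 /=; exact: leq_trans kN (leq_maxl _ _).
Qed.

Lemma mode_all (X Y : eqType) (f : X -> Y) (U : seq X) y0 y :
  U != [::] -> (forall u, u \in U -> f u = y0) -> is_mode f U y -> y = y0.
Proof.
case: U => [//|u0 U] _ hU; rewrite /is_mode => hm.
have hc : count (fun v => f v == f u0) (u0 :: U) = size (u0 :: U).
  apply/eqP; rewrite -all_count; apply/allP => v hv.
  by rewrite (hU _ hv) (hU _ (mem_head _ _)).
have : (size (u0 :: U) <= modefreq f (u0 :: U))%N.
  rewrite -{1}hc /modefreq.
  exact: (leq_bigmax_seq (F := fun a => count (fun v => f v == f a) (u0 :: U))
           u0 (mem_head _ _) isT).
rewrite -hm => hle.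
have : all (fun v => f v == y) (u0 :: U).
  by rewrite all_count eqn_leq count_size hle.
move=> /allP /(_ u0 (mem_head _ _)) /eqP <-; exact: hU (mem_head _ _).
Qed.

Lemma conclude (R : realType) (X Y : eqType) (dist : X -> X -> R) (f : X -> Y) m
  (S : seq X) x eps0 (W : seq X) :
  is_metric dist -> (1 < m)%N -> uniq W -> size W = m -> {subset W <= S} ->
  (forall u, u \in W -> dist x u < eps0) ->
  (forall u, u \in S -> dist x u < eps0 -> f u = f x) ->
  forall U, nn_choice dist f m S x U -> forall y, is_mode f U y -> y = f x.
Proof.
move=> hmet m1 uW sW WS hWd hS U; rewrite /nn_choice.
case: ifP => xS.
  move=> -> y; apply: mode_all => // u; rewrite inE => /eqP ->.
  by [].
rewrite /nn_family.
have hsz : (m <= size (undup S))%N.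
  rewrite -sW; apply: uniq_leq_size => // u /WS; by rewrite mem_undup.
rewrite ltnNge hsz /= => [[[[uU sU US] hmin] _]] y.
have hUd : forall u, u \in U -> dist x u < eps0.
  move=> u uUu; rewrite ltNge; apply/negP => hu.
  have hwu : forall w, w \in W -> w != u.
    by move=> w /hWd hw; apply/eqP => e; move: hw; rewrite e; lra.
  have m0 : (0 < m)%N by apply: leq_trans m1.
  have [w wW wU] : exists2 w, w \in W & w \notin U.
    case: (boolP (all (fun w => w \in U) W)) => [hall|/allPn //].
    have : {subset W <= rem u U}.
      move=> w wW; rewrite (mem_rem_uniq u uU) inE /= hwu //=.
      exact: (allP hall).
    move/(uniq_leq_size uW); rewrite size_rem // sU sW.
    by case: (m) m0 => //= k _; rewrite ltnn.
  have hV : msubset m S (w :: rem u U).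
    split.
    - rewrite /= rem_uniq // andbT; apply/negP => /mem_rem; exact/negP.
    - by rewrite /= size_rem // sU prednK.
    - move=> v; rewrite in_cons => /orP[/eqP->|/mem_rem]; [exact: WS|exact: US].
  have := hmin _ hV.
  rewrite (perm_big _ (perm_to_rem uUu)) !big_cons.
  have := hWd w wW; rewrite /=; set s := \sum_(_ <- rem u U) _; lra.
apply: mode_all.
- by apply/eqP => U0; move: sU; rewrite U0 /= => m0; move: m1; rewrite -m0.
- by move=> u uUu; apply: hS; [apply: US|apply: hUd].
Qed.

Lemma bigI_memE {T : Type} (L : seq nat) (G : nat -> set T) w :
  (\big[setI/setT]_(n <- L) G n) w -> forall n, n \in L -> G n w.
Proof.
elim: L => [//|a L IH]; rewrite big_cons => -[ha hL] n.
rewrite in_cons => /orP[/eqP->//|]; exact: IH.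
Qed.

Theorem mainTheorem11 (R : realType)
  (dX : measure_display) (X : measurableType dX) (dist : X -> X -> R)
  (mu : probability X R) (Y : countType) (f : X -> Y)
  (dO : measure_display) (Omega : measurableType dO) (P : probability Omega R)
  (m : nat) (kappa : nat -> nat)
  (cand : nat * nat -> Omega -> X) (z : nat -> Omega -> X) (x : X) :
  (1 < m)%N ->
  is_metric dist ->
  (forall (c : X) (eps : R), measurable (oball dist c eps)) ->
  (forall y : Y, measurable (f @^-1` [set y])) ->
  (forall n, (1 <= n)%N -> (0 < kappa n)%N) ->
  (forall rho : R, 0 < rho <= 1 ->
     (fun N => \sum_(1 <= n < N) rho ^+ kappa n) @ \oo --> +oo) ->
  iid_family P [set ij | (1 <= ij.1)%N /\ (ij.2 < kappa ij.1)%N] cand mu ->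
  farthest_process dist kappa cand z ->
  in_supp dist mu x ->
  ~ f_boundary dist mu f x ->
  {ae P, forall w, exists N, forall n, (N <= n)%N ->
     forall U, nn_choice dist f m (Zseq z n w) x U ->
     forall y, is_mode f U y -> y = f x}.
Proof.
move=> m1 hmet hball hfm hk hdiv hiid hfar hsupp hnb.
have [eps0 [e0 hD0]] : exists eps, 0 < eps /\
    mu (oball dist x eps `\` f @^-1` [set f x]) = 0%E.
  move: hnb; rewrite /f_boundary => /existsNP [eps /not_implyP [e0 h]].
  exists eps; split => //; apply/eqP; rewrite eq_le measure_ge0 andbT leNgt.
  exact/negP.
set D := oball dist x eps0 `\` f @^-1` [set f x].
have mD : measurable D by apply: measurableD.
set BadI := \bigcup_n \bigcup_j (if ((1 <= n) && (j < kappa n))%N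
   then cand (n, j) @^-1` D else set0).
have nI : P.-negligible BadI.
  apply: negligible_bigcup => n; apply: negligible_bigcup => j.
  case: ifP => h; last exact: negligible_set0.
  move/andP: h => [n1 jk]; have [hm [hl _]] := hiid.
  exists (cand (n, j) @^-1` D); split => //.
  - by rewrite -[X in measurable X]setTI; exact: (hm (n, j)).
  - by have := hl (n, j) D (conj n1 jk) mD; rewrite hD0 => <-.
set Bk := fun k : nat => oball dist x (eps0 / k.+1%:R).
set Ek := fun k => \bigcap_(n in [set n | (1 <= n)%N]) ~` Aev kappa cand (Bk k) n.
have nE : P.-negligible (\bigcup_k Ek k).
  apply: negligible_bigcup => k; exists (Ek k); split => //.
  - apply: bigcap_measurableType => n n1; apply: measurableC.
    exact: (@Aev_meas _ _ _ _ _ _ _ _ _ _ hiid (hball _ _) n n1).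
  - apply: (@never_null _ _ _ _ _ P mu kappa cand (Bk k) hiid (hball _ _)) => //.
    have hpos : (0 < mu (Bk k))%E by apply: hsupp; apply: divr_gt0.
    apply: fine_gt0; rewrite hpos /=.
    by apply: (le_lt_trans (probability_le1 mu (hball _ _))); rewrite ltey.
rewrite /almost_everywhere.
apply: (negligibleS _ (negligibleU nI nE)) => w /= nQ.
have [//|hbad] := pselect ((BadI `|` \bigcup_k Ek k) w).
exfalso; apply: nQ.
have H2 : forall n, (1 <= n)%N -> dist x (z n w) < eps0 -> f (z n w) = f x.
  move=> n n1 hn; case: (f (z n w) =P f x) => // hne; exfalso; apply: hbad.
  have [[j jk ej] _] := hfar n w n1.
  left; exists n => //; exists j => //; rewrite n1 jk /= /D /=; split.
    by rewrite /oball /= -ej.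
  by rewrite /= -ej.
have H1 : forall r, 0 < r -> exists2 n, (1 <= n)%N & dist x (z n w) < r.
  move=> r r0.
  set k := Num.Def.archi_bound (eps0 / r).
  have hk1 : eps0 / r < k%:R by apply: archi_boundP; apply: divr_ge0; lra.
  have hk2 : eps0 / k.+1%:R < r.
    rewrite ltr_pdivrMr ?ltr0Sn //.
    have : eps0 < r * k%:R by rewrite -ltr_pdivrMl // mulrC.
    rewrite -addn1 natrD; nra.
  have : ~ Ek k w by move=> h; apply: hbad; right; exists k.
  move/existsNP => [n /not_implyP [n1 /contrapT hA]].
  exists n => //.
  have [[j jk ej] _] := hfar n w n1.
  rewrite ej; apply: lt_trans hk2.
  have := @bigI_memE _ _ (fun j => cand (n, j) @^-1` Bk k) w hA j.
  by rewrite mem_iota add0n => /(_ jk).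
case: (pselect (exists n, (1 <= n)%N /\ z n w = x)) => [[n0 [n01 e]]|hnx].
  exists n0 => n hn U; rewrite /nn_choice.
  have -> : x \in Zseq z n w.
    apply/mapP; exists n0 => //; rewrite mem_iota n01 add1n ltnS //.
  move=> -> y; apply: mode_all => // u; rewrite inE => /eqP ->.
  by [].
have hne : forall n, (1 <= n)%N -> z n w != x.
  by move=> n n1; apply/eqP => e; apply: hnx; exists n.
have [N [W [uW sW hW]]] := @collect _ _ dist (fun k => z k w) x eps0 hmet e0 H1 hne m.
exists N => n hn; apply: (@conclude _ _ _ _ _ _ _ _ eps0 W) => //.
- move=> u /hW [_ [k /andP[k1 kN] <-]].
  apply/mapP; exists k => //; rewrite mem_iota k1 add1n ltnS.
  exact: leq_trans kN hn.
- by move=> u /hW [].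
- move=> u /mapP [k]; rewrite mem_iota add1n ltnS => /andP[k1 _] -> hu.
  exact: H2.
Qed.
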